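(* Let $(X,d)$ be a compact metric space and let $f_1,f_2:X\to X$ be continuous. Suppose there is $c\in X$ with $f_1(x)=c$ for all $x\in X$, $f_2(c)=c$, and $f_2$ is sensitive. Then the multiple mapping $F=\{f_1,f_2\}$ is (Hausdorff metric) sensitive.
   Context: For the multiple mapping $F=\{f_1,f_2\}$ and $n\ge 1$, $F^n(x)=\{f_{i_1}f_{i_2}\cdots f_{i_n}(x)\mid i_1,\dots,i_n\in\{1,2\}\}$, a nonempty compact subset of $X$. The Hausdorff metric on nonempty compact subsets is $d_H(A,B)=\max\{\sup_{a\in A}\inf_{b\in B}d(a,b),\sup_{b\in B}\inf_{a\in A}d(a,b)\}$. $F$ is (Hausdorff metric) sensitive if there is $\delta>0$ such that for every nonempty open $U\subset X$ there exist $x,y\in U$ and $n\in\mathbb{Z}^+$ with $d_H(F^n(x),F^n(y))>\delta$. A continuous map $f:X\to X$ is sensitive if there is $\delta>0$ such that for every nonempty open $U\subset X$ there exist $x,y\in U$ and $n\in\mathbb{Z}^+$ with $d(f^n(x),f^n(y))>\delta$. Here $\mathbb{Z}^+=\{1,2,3,\dots\}$. *)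

(* Defs.v *)
From HB Require Import structures.
From mathcomp Require Import all_boot all_order all_algebra.
From mathcomp Require Import all_classical all_reals.
From Stdlib Require List.
Set Implicit Arguments. Unset Strict Implicit. Unset Printing Implicit Defensive.
Import Order.TTheory GRing.Theory Num.Theory.
Local Open Scope ring_scope.
Local Open Scope classical_set_scope.

Section Defs.
Context {R : realType} {X : Type}.

Definition is_metric (d : X -> X -> R) : Prop :=
  (forall x y, 0 <= d x y) /\
  (forall x y, d x y = 0 <-> x = y) /\
  (forall x y, d x y = d y x) /\
  (forall x y z, d x z <= d x y + d y z).

Definition dopen (d : X -> X -> R) (U : set X) : Prop :=
  forall x, U x -> exists2 e : R, 0 < e & forall y, d x y < e -> U y.

Definition dcompact (d : X -> X -> R) : Prop :=
  forall (I : Type) (U : I -> set X),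
    (forall i, dopen d (U i)) -> (forall x, exists i, U i x) ->
    exists s : seq I, forall x, exists2 i, List.In i s & U i x.

Definition dcontinuous (d : X -> X -> R) (f : X -> X) : Prop :=
  forall x (e : R), 0 < e ->
    exists2 del : R, 0 < del & forall y, d x y < del -> d (f x) (f y) < e.

(* F^n(x) = { f_{i1} (f_{i2} ( ... f_{in}(x))) | i1..in in {1,2} };
   the word w = [:: i1; ...; in] is encoded by booleans (false = f1, true = f2). *)
Definition Fiter (f1 f2 : X -> X) (n : nat) (x : X) : set X :=
  [set y | exists w : seq bool,
      size w = n /\ y = foldr (fun b z => (if b then f2 else f1) z) x w].

Definition dH (d : X -> X -> R) (A B : set X) : R :=
  Num.max (sup [set r | exists2 a, A a & r = inf [set d a b | b in B]])
          (sup [set r | exists2 b, B b & r = inf [set d a b | a in A]]).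

Definition sensitive (d : X -> X -> R) (f : X -> X) : Prop :=
  exists2 del : R, 0 < del &
    forall U : set X, dopen d U -> U !=set0 ->
      exists x y n, [/\ U x, U y, (1 <= n)%N & d (iter n f x) (iter n f y) > del].

Definition F_sensitive (d : X -> X -> R) (f1 f2 : X -> X) : Prop :=
  exists2 del : R, 0 < del &
    forall U : set X, dopen d U -> U !=set0 ->
      exists x y n, [/\ U x, U y, (1 <= n)%N &
                        dH d (Fiter f1 f2 n x) (Fiter f1 f2 n y) > del].

End Defs.

(* Main.v *)
Require Import Defs.
From mathcomp Require Import all_boot all_order all_algebra.
From mathcomp Require Import all_classical all_reals.
Import Order.TTheory GRing.Theory Num.Theory.
Local Open Scope ring_scope.
Local Open Scope classical_set_scope.

Lemma key_lb (R : realType) (X : Type) (e : X -> X -> R) (A B : set X)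
  (a b0 : X) (M m : R) :
  (forall u v, 0 <= e u v) -> A a -> B b0 ->
  (forall a', A a' -> e a' b0 <= M) ->
  (forall b', B b' -> m <= e a b') ->
  m <= sup [set r | exists2 a', A a' & r = inf [set e a' b | b in B]].
Proof.
move=> e0 Aa Bb0 HM Hm.
have Hinf : forall a', inf [set e a' b | b in B] <= e a' b0.
  move=> a'; apply: (@ge_inf R [set e a' b | b in B]).
    by exists 0 => _ [b _ <-].
  by exists b0.
apply: (@le_trans _ _ (inf [set e a b | b in B])).
  apply: lb_le_inf; first by exists (e a b0), b0.
  by move=> _ [b Bb <-]; apply: Hm.
apply: ub_le_sup; last by exists a.
by exists M => _ [a' Aa' ->]; apply: le_trans (Hinf a') (HM a' Aa').
Qed.

Lemma foldr_char (X : Type) (f1 f2 : X -> X) (c x : X) :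
  (forall x, f1 x = c) -> f2 c = c -> forall w : seq bool,
  foldr (fun b z => (if b then f2 else f1) z) x w =
  if all id w then iter (size w) f2 x else c.
Proof.
move=> h1 h2; elim=> [//|[] w IH] /=; last by rewrite h1.
rewrite IH; by case: (all id w).
Qed.

Theorem theorem3p3 (R : realType) (X : Type) (d : X -> X -> R)
  (f1 f2 : X -> X) (c : X) :
  is_metric d -> dcompact d ->
  dcontinuous d f1 -> dcontinuous d f2 ->
  (forall x, f1 x = c) -> f2 c = c -> sensitive d f2 ->
  F_sensitive d f1 f2.
Proof.
move=> [d0 [d_eq [dsym dtri]]] _ _ _ h1 h2 [del del0 Hs].
have Fch : forall n x z, (1 <= n)%N -> Fiter f1 f2 n x z ->
    z = c \/ z = iter n f2 x.
  move=> n x z _ [w [<- ->]]; rewrite (@foldr_char X f1 f2 c x h1 h2).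
  by case: (all id w); [right|left].
have Fc : forall n x, (1 <= n)%N -> Fiter f1 f2 n x c.
  move=> [//|n] x _; exists (nseq n.+1 false); split; first by rewrite size_nseq.
  by rewrite (@foldr_char X f1 f2 c x h1 h2).
have Fa : forall n x, Fiter f1 f2 n x (iter n f2 x).
  move=> n x; exists (nseq n true); split; first by rewrite size_nseq.
  rewrite (@foldr_char X f1 f2 c x h1 h2) size_nseq all_nseq orbT //.
have dcc : d c c = 0 by apply/d_eq.
exists (del / 2); first by rewrite divr_gt0.
move=> U oU nU; have [x [y [n [Ux Uy n1 Hd]]]] := Hs U oU nU.
exists x, y, n; split => //.
set a := iter n f2 x in Hd *; set b := iter n f2 y in Hd *.
have tri : d a b <= d a c + d c b by apply: dtri.
rewrite /dH; case: (lerP (d b c) (d a c)) => hc.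
- apply: (@lt_le_trans _ _ (Num.min (d a c) (d a b))); last first.
    rewrite le_max; apply/orP; left.
    apply: (@key_lb R X d _ _ a c (d a c)) => //.
    + by apply: Fc.
    + move=> a' /(Fch _ _ _ n1) [->|->]; by rewrite ?dcc.
    + move=> b' /(Fch _ _ _ n1) [->|->]; by rewrite ?ge_min lexx ?orbT.
  rewrite lt_min; apply/andP; split; last by apply: lt_trans Hd; rewrite ltr_pdivrMr // ltr_pMr // ltr1n.
  rewrite (dsym c b) in tri; move: (lt_le_trans Hd tri) => H.
  have : del < d a c + d a c by apply: lt_le_trans H _; rewrite lerD2l.
  by move=> h; rewrite ltr_pdivrMr // mulr_natr mulr2n.
- apply: (@lt_le_trans _ _ (Num.min (d c b) (d a b))); last first.
    rewrite le_max; apply/orP; right.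
    apply: (@key_lb R X (fun u v => d v u) _ _ b c (d c b)) => //.
    + by apply: Fc.
    + move=> a' /(Fch _ _ _ n1) [->|->] /=; by rewrite ?dcc.
    + move=> b' /(Fch _ _ _ n1) [->|->] /=; by rewrite ?ge_min lexx ?orbT.
  rewrite lt_min; apply/andP; split; last by apply: lt_trans Hd; rewrite ltr_pdivrMr // ltr_pMr // ltr1n.
  rewrite (dsym a c) in tri; move: (lt_le_trans Hd tri) => H.
  have : del < d c b + d c b.
    apply: lt_le_trans H _; rewrite lerD2r -(dsym b c) -(dsym a c); exact: ltW.
  by move=> h; rewrite ltr_pdivrMr // mulr_natr mulr2n.
Qed.
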